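(* Let $\Omega\subseteq\mathbb{R}^n$ be open, $\nu,C_1,\dots,C_{n-1}\in\mathcal{C}^\infty(\Omega,\mathbb{R})$, $H:=C_{n-1}$, and $X$ the vector field on $\Omega$ with components $X_i=\nu\cdot\frac{\partial(C_1,\dots,C_{n-2},x_i,H)}{\partial(x_1,\dots,x_n)}$. Let $\overline{x}_e\in\mathcal{E}^{C_{n-1}}_{C_1,\dots,C_{n-2}}$ be a non-degenerate regular equilibrium point of $X$, let $\Omega'\subseteq\Omega$ be any open neighborhood of $\overline{x}_e$ and $\Phi:\Omega'\to W':=\Phi(\Omega')$ a smooth diffeomorphism. Then $$\mathcal{I}_{\Phi_\star X}(\Phi(\overline{x}_e))=\mathcal{I}_X(\overline{x}_e),$$ where $\mathcal{I}_{\Phi_\star X}(\Phi(\overline{x}_e))$ is computed from the Hamiltonian form of $\Phi_\star X$ with data $(\nu_\Phi;\Phi_\star C_1,\dots,\Phi_\star C_{n-2};\Phi_\star H)$ (in which $\Phi(\overline{x}_e)$ is again a non-degenerate regular equilibrium).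
   Context: $\langle\cdot,\cdot\rangle$ is the standard inner product, $\nabla$ the gradient, $\operatorname{Hess}F=\mathrm{D}(\nabla F)$, $\frac{\partial(\cdots)}{\partial(x_1,\dots,x_n)}$ a Jacobian determinant. For decomposable $k$-vectors, $\langle u_1\wedge\dots\wedge u_k,v_1\wedge\dots\wedge v_k\rangle_k:=\det[\langle u_i,v_j\rangle]$. $\mathcal{E}^{C_{n-1}}_{C_1,\dots,C_{n-2}}:=\{\overline{x}\in\Omega:\nu(\overline{x})\neq0,\ \nabla C_1\wedge\dots\wedge\nabla C_{n-2}(\overline{x})\neq0,\ \nabla C_1\wedge\dots\wedge\nabla C_{n-1}(\overline{x})=0\}$. For $\overline{x}_e$ in it, $\overrightarrow{\lambda_e}\in\mathbb{R}^{n-2}$ is the unique vector with $\nabla H(\overline{x}_e)+\sum_i\lambda^e_i\nabla C_i(\overline{x}_e)=0$, $F_{\overrightarrow{\lambda_e}}:=H+\sum_i\lambda^e_iC_i$; non-degeneracy means $A:=\operatorname{Hess}F_{\overrightarrow{\lambda_e}}(\overline{x}_e)$ invertible, and $\mathcal{I}_X(\overline{x}_e):=\nu^2(\overline{x}_e)\det(A)\langle A^{-1}\nabla C_1(\overline{x}_e)\wedge\dots\wedge A^{-1}\nabla C_{n-2}(\overline{x}_e),\nabla C_1(\overline{x}_e)\wedge\dots\wedge\nabla C_{n-2}(\overline{x}_e)\rangle_{n-2}$. For functions, $\Phi_\star f:=f\circ\Phi^{-1}$; $\Phi_\star X$ is the push-forward; $\nu_\Phi:=\Phi_\star\nu\cdot\Phi_\star\det(\mathrm{D}\Phi)$;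 $\Phi_\star X$ has components $\nu_\Phi\cdot\frac{\partial(\Phi_\star C_1,\dots,\Phi_\star C_{n-2},y_i,\Phi_\star H)}{\partial(y_1,\dots,y_n)}$, and $\mathcal{I}_{\Phi_\star X}(\Phi(\overline{x}_e))$ is defined by the same formula as $\mathcal{I}_X$ with $\nu,C_i,H,\overline{x}_e,\overrightarrow{\lambda_e}$ replaced by $\nu_\Phi,\Phi_\star C_i,\Phi_\star H,\Phi(\overline{x}_e),\overrightarrow{\lambda_e}$. *)

(* Defs.v *)
From HB Require Import structures.
From mathcomp Require Import all_boot all_order all_algebra.
From mathcomp Require Import all_classical all_reals all_analysis.
Set Implicit Arguments. Unset Strict Implicit. Unset Printing Implicit Defensive.
Import Order.TTheory GRing.Theory Num.Theory.
Import numFieldNormedType.Exports.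
Local Open Scope classical_set_scope.
Local Open Scope ring_scope.

Section Defs.
Variable R : realType.

Definition evec (n : nat) (i : 'I_n) : 'rV[R]_n := delta_mx 0 i.

Definition partial (n : nat) (i : 'I_n) (f : 'rV[R]_n -> R) : 'rV[R]_n -> R :=
  fun x => 'D_(evec i) f x.

Definition iter_partial (n : nat) (s : seq 'I_n) (f : 'rV[R]_n -> R) :=
  foldr (fun i g => partial i g) f s.

Definition smooth_on (n : nat) (U : set 'rV[R]_n) (f : 'rV[R]_n -> R) :=
  forall (s : seq 'I_n) (x : 'rV[R]_n), U x -> differentiable (iter_partial s f) x.

Definition smooth_map_on (n : nat) (U : set 'rV[R]_n) (P : 'rV[R]_n -> 'rV[R]_n) :=
  forall k : 'I_n, smooth_on U (fun x => P x 0 k).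

Definition grad (n : nat) (f : 'rV[R]_n -> R) (x : 'rV[R]_n) : 'rV[R]_n :=
  \row_j partial j f x.

Definition hess (n : nat) (f : 'rV[R]_n -> R) (x : 'rV[R]_n) : 'M[R]_n :=
  \matrix_(i, j) partial j (partial i f) x.

Definition jac (n : nat) (P : 'rV[R]_n -> 'rV[R]_n) (x : 'rV[R]_n) : 'M[R]_n :=
  \matrix_(i, j) partial j (fun y => P y 0 i) x.

Definition gradmx (k n : nat) (f : 'I_k -> 'rV[R]_n -> R) (x : 'rV[R]_n)
  : 'M[R]_(k, n) := \matrix_(i, j) partial j (f i) x.

Definition ip (n : nat) (u v : 'rV[R]_n) : R := (u *m v^T) 0 0.

(* action of a matrix A on a vector u (u as a column vector, A u) *)
Definition mxapp (n : nat) (A : 'M[R]_n) (u : 'rV[R]_n) : 'rV[R]_n := u *m A^T.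

(* the decomposable k-vector u_1 /\ ... /\ u_k (rows of M) is zero iff all
   its coordinates on the basis e_{i_1} /\ ... /\ e_{i_k}, i_1 < ... < i_k,
   (the k x k minors) vanish *)
Definition wedge_zero (k n : nat) (M : 'M[R]_(k, n)) :=
  forall f : 'I_k -> 'I_n, {homo f : i j / (i < j)%N} -> \det (colsub f M) = 0.

Definition wedge_ip (k n : nat) (u v : 'I_k -> 'rV[R]_n) : R :=
  \det (\matrix_(i, j) ip (u i) (v j)).

Lemma addn11 (m : nat) : (m + 1 + 1 = m.+2)%N.
Proof. by rewrite !addn1. Qed.

(* Hamiltonian vector field X, n = m.+2, Casimirs C_1..C_m, H = C_{n-1}:
   X_i = nu * d(C_1,..,C_m,x_i,H)/d(x_1,..,x_n) *)
Definition ham_field (m : nat) (nu : 'rV[R]_m.+2 -> R)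
  (C : 'I_m -> 'rV[R]_m.+2 -> R) (H : 'rV[R]_m.+2 -> R) (x : 'rV[R]_m.+2)
  : 'rV[R]_m.+2 :=
  \row_i (nu x * \det (castmx (addn11 m, erefl m.+2)
                 (col_mx (col_mx (gradmx C x) (evec i)) (grad H x)))).

Definition in_E (m : nat) (Om : set 'rV[R]_m.+2) (nu : 'rV[R]_m.+2 -> R)
  (C : 'I_m -> 'rV[R]_m.+2 -> R) (H : 'rV[R]_m.+2 -> R) (x : 'rV[R]_m.+2) :=
  [/\ Om x, nu x != 0, ~ wedge_zero (gradmx C x)
    & wedge_zero (col_mx (gradmx C x) (grad H x))].

Definition Flam (m : nat) (C : 'I_m -> 'rV[R]_m.+2 -> R) (H : 'rV[R]_m.+2 -> R)
  (lam : 'rV[R]_m) : 'rV[R]_m.+2 -> R :=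
  fun x => H x + \sum_(i < m) lam 0 i * C i x.

Definition indexI (m : nat) (nu : 'rV[R]_m.+2 -> R)
  (C : 'I_m -> 'rV[R]_m.+2 -> R) (H : 'rV[R]_m.+2 -> R) (lam : 'rV[R]_m)
  (x : 'rV[R]_m.+2) : R :=
  let A := hess (Flam C H lam) x in
  nu x ^+ 2 * \det A *
  wedge_ip (fun i => mxapp (invmx A) (grad (C i) x)) (fun i => grad (C i) x).

(* nu_Phi = Phi_* nu . Phi_* det(D Phi), with Psi = Phi^{-1} *)
Definition nu_push (n : nat) (nu : 'rV[R]_n -> R) (P Q : 'rV[R]_n -> 'rV[R]_n)
  : 'rV[R]_n -> R := fun y => nu (Q y) * \det (jac P (Q y)).

End Defs.

(* Main.v *)
Require Import Defs.
From HB Require Import structures.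
From mathcomp Require Import all_boot all_order all_algebra.
From mathcomp Require Import all_classical all_reals all_analysis.
From mathcomp Require Import ring.
Import Order.TTheory GRing.Theory Num.Theory.
Import numFieldNormedType.Exports.
Local Open Scope classical_set_scope.
Local Open Scope ring_scope.

Set Implicit Arguments. Unset Strict Implicit. Unset Printing Implicit Defensive.
Section Analysis.
Context {R : realType} {n : nat}.
Implicit Types (f : 'rV[R]_n -> R) (g : 'rV[R]_n -> 'rV[R]_n).

Lemma partialE f x j : differentiable f x -> partial j f x = 'd f x (evec R j).
Proof. by move=> df; rewrite /partial deriveE. Qed.

Lemma diff_partial f x v : differentiable f x ->
  'd f x v = \sum_(j < n) v 0 j * partial j f x.
Proof.
move=> df; rewrite [in LHS](row_sum_delta v) linear_sum.
apply: eq_bigr => j _; rewrite linearZ /= partialE //.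
Qed.

Lemma comp_differentiable g y :
  (forall k, differentiable (fun z => g z 0 k) y) -> differentiable g y.
Proof.
move=> dk.
have -> : g = \sum_(k < n) (fun z => g z 0 k *: (delta_mx 0 k : 'rV[R]_n)).
  apply/funext => z; rewrite fct_sumE; exact: row_sum_delta.
apply: differentiable_sum => k; exact: differentiableZl.
Qed.

Lemma diff_coord g y v k :
  (forall k, differentiable (fun z => g z 0 k) y) ->
  ('d g y v) 0 k = 'd (fun z => g z 0 k) y v.
Proof.
move=> dk; have dg := comp_differentiable dk.
rewrite -!deriveE // derive_mx ?mxE //; exact: diff_derivable.
Qed.

Lemma chain_partial f g y i :
  (forall k, differentiable (fun z => g z 0 k) y) -> differentiable f (g y) ->
  partial i (f \o g) y =
    \sum_(k < n) partial k f (g y) * partial i (fun z => g z 0 k) y.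
Proof.
move=> dk df; have dg := comp_differentiable dk.
rewrite partialE; last exact: differentiable_comp.
rewrite diff_comp //= diff_partial //.
apply: eq_bigr => k _; rewrite mulrC diff_coord // -partialE //.
Qed.


Lemma second_chain f g (W : set 'rV[R]_n) y0 i j :
  open W -> W y0 ->
  (forall y k, W y -> differentiable (fun z => g z 0 k) y) ->
  (forall k l, differentiable (partial l (fun z => g z 0 k)) y0) ->
  (forall y, W y -> differentiable f (g y)) ->
  (forall k, differentiable (partial k f) (g y0)) ->
  partial j (partial i (f \o g)) y0 =
   \sum_(k < n) ((\sum_(l < n) partial l (partial k f) (g y0) *
                     partial j (fun z => g z 0 l) y0) * partial i (fun z => g z 0 k) y0
              + partial k f (g y0) * partial j (partial i (fun z => g z 0 k)) y0).
Proof.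
move=> oW Wy0 dg d2g df d2f.
have nW : \forall y \near y0, W y by apply: open_nbhs_nbhs; split.
pose h k := (partial k f \o g) * partial i (fun z => g z 0 k).
have eqn : \forall y \near y0, partial i (f \o g) y = (\sum_(k < n) h k) y.
  near=> y; have Wy : W y by near: y.
  rewrite fct_sumE chain_partial //; last exact: df.
  by move=> k; apply: dg.
rewrite /partial (near_eq_derive _ eqn) derive_sum; last first.
  move=> k; apply: diff_derivable; apply: differentiableM => //.
  apply: differentiable_comp => //; exact: comp_differentiable (fun k => dg _ k Wy0).
apply: eq_bigr => k _; rewrite /h deriveM; last 2 first.
- apply: diff_derivable; apply: differentiable_comp => //; exact: comp_differentiable (fun k => dg _ k Wy0).
- exact: diff_derivable.
have E := chain_partial (f := partial k f) j (fun k => dg _ k Wy0) (d2f k).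
rewrite /partial in E; rewrite E addrC.
by congr (_ + _); rewrite mulrC.
Unshelve. all: by end_near. Qed.


Lemma partial_coord i j (x : 'rV[R]_n) :
  partial j (fun z : 'rV[R]_n => z 0 i) x = (j == i)%:R.
Proof.
rewrite /partial.
have := @derive_mx R _ 1 n id x (evec R j) (@derivable_id _ _ x (evec R j)).
rewrite derive_id => /matrixP /(_ 0 i); rewrite !mxE => <-.
by rewrite eqxx /= eq_sym.
Qed.

End Analysis.

Section S.
Context {R : realType} {V W : normedModType R}.
Lemma near_eq_differentiable (f g : V -> W) x :
  {near x, f =1 g} -> differentiable f x -> differentiable g x.
Proof.
move=> fg df.
have gx : f x = g x := nbhs_singleton fg.
have key : g \o shift x = cst (g x) + 'd f x +o_ 0 id.
  apply/eqaddoP => e e0.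
  have := (eqaddoP _ _ _ _).1 (diff_locally df) e e0.
  have : \forall y \near 0, f (y + x) = g (y + x).
    move: fg; rewrite (near_shift 0 x) /= subr0.
    by apply: filterS => y.
  move=> H1 H2; near=> y.
  have fgy : f (y + x) = g (y + x) by near: y.
  have hb : `|(f \o shift x - (cst (f x) + 'd f x)) y| <= e * `|y| by near: y.
  by move: hb; rewrite !fctE /= -gx -fgy.

have dd : 'd g x = 'd f x :> (V -> W) := diff_unique (diff_continuous df) key.
apply/diff_locallyP; rewrite dd; split; first exact: diff_continuous df. exact: key.
Unshelve. all: by end_near. Qed.
End S.

Section Alg.
Context {R : realType}.

Lemma minor_rank k n (M : 'M[R]_(k,n)) (f : 'I_k -> 'I_n) :
  (\rank M < k)%N -> \det (colsub f M) = 0.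
Proof.
move=> rk; have [//|dn0] := eqVneq (\det (colsub f M)) 0.
have U : colsub f M \in unitmx by rewrite unitmxE unitfE.
have := mxrank_unit U.
have : (\rank (colsub f M) <= \rank M)%N.
  by rewrite -[M in colsub f M]mulmx1 -mulmx_colsub mxrankM_maxl.
move=> le rkc; rewrite rkc in le; move: (leq_ltn_trans le rk); by rewrite ltnn.
Qed.

Lemma exists_minor k n (M : 'M[R]_(k,n)) : \rank M = k ->
  exists f : 'I_k -> 'I_n, {homo f : i j / (i < j)%N} /\ \det (colsub f M) != 0.
Proof.
move=> rkM.
have rf : row_full M^T by rewrite /row_full mxrank_tr rkM.
pose f := fullrankfun rf.
have finj : injective f by apply: fullrankfun_inj.
have U : colsub f M \in unitmx.
  by rewrite -unitmx_tr trmx_mxsub; exact: fullrowsub_unit.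
case: k M rkM rf f finj U => [|k] M rkM rf f finj U.
  by exists f; split => [i|]; [case: i | rewrite det_mx00 oner_neq0].
pose S := [set f i | i in 'I_k.+1]%SET.
pose s := enum S.
have ss : size s = k.+1 by rewrite -cardE card_imset // card_ord.
pose g i := nth (f ord0) s i.
have gS i : (i < k.+1)%N -> g i \in S by move=> ik; rewrite -mem_enum mem_nth // ss.
have hex (i : 'I_k.+1) : exists j, f j == g i.
  by have /imsetP[j _ ->] := gS i (ltn_ord i); exists j.
pose h i := xchoose (hex i).
have fh i : f (h i) = g i by apply/eqP; exact: (xchooseP (hex i)).
have hinj : injective h.
  move=> i j hij; have := congr1 f hij; rewrite !fh => /eqP.
  rewrite /g nth_uniq ?ss ?ltn_ord ?enum_uniq // => /eqP; exact: val_inj.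
pose sig := perm.perm hinj.
have srt : sorted (relpre val ltn) s.
  rewrite /s /enum_mem; apply: sorted_filter; first by move=> a b c; rewrite /relpre /=; apply: ltn_trans.
  rewrite -enumT -sorted_map val_enum_ord; exact: iota_ltn_sorted.
exists (fun i => g i); split.
  move=> i j ij; have tr : transitive (relpre (@nat_of_ord n) ltn).
    by move=> a b c; rewrite /relpre /=; apply: ltn_trans.
  have := sorted_ltn_nth tr (f ord0) srt.
  move=> /(_ i j); rewrite !inE ss !ltn_ord => /(_ isT isT ij) //.
have -> : colsub (fun i => g i) M = col_perm sig (colsub f M).
  by apply/matrixP => a b; rewrite !mxE perm.permE fh.
rewrite col_permE det_mulmx det_perm mulf_eq0 negb_or signr_eq0 andbT.
by rewrite -unitfE -unitmxE.
Qed.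

Lemma wedge_zeroP k n (M : 'M[R]_(k,n)) : wedge_zero M <-> (\rank M < k)%N.
Proof.
split; last by move=> rk f _; exact: minor_rank.
move=> wz; rewrite ltn_neqAle rank_leq_row andbT; apply/negP => /eqP rk.
have [f [hf dn]] := exists_minor rk.
by move: dn; rewrite wz // eqxx.
Qed.

Lemma wedge_zero_mul k n (M : 'M[R]_(k,n)) (J : 'M[R]_n) :
  J \in unitmx -> (wedge_zero (M *m J) <-> wedge_zero M).
Proof. by move=> U; rewrite !wedge_zeroP mxrankMfree // row_free_unit. Qed.


Lemma index_alg n (nu0 : R) (A J K : 'M[R]_n) k (u : 'I_k -> 'rV[R]_n) :
  J *m K = 1%:M -> A \in unitmx ->
  (nu0 * \det K) ^+ 2 * \det (J^T *m A *m J) *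
    wedge_ip (fun i => mxapp (invmx (J^T *m A *m J)) (u i *m J)) (fun i => u i *m J)
  = nu0 ^+ 2 * \det A * wedge_ip (fun i => mxapp (invmx A) (u i)) u.
Proof.
move=> JK UA; have [UJ UK] := mulmx1_unit JK.
have iJ : invmx J = K by rewrite -[RHS](mulKmx UJ) JK mulmx1.
have KJ : K *m J = 1%:M by rewrite -iJ mulVmx.
set A' := J^T *m A *m J.
have UA' : A' \in unitmx by rewrite !unitmx_mul unitmx_tr UJ UA.
have iA' : invmx A' = K *m invmx A *m K^T.
  rewrite -[RHS](mulKmx UA') /A'.
  rewrite -!mulmxA [J *m (K *m _)]mulmxA JK mul1mx.
  rewrite [A *m (invmx A *m _)]mulmxA mulmxV // mul1mx -trmx_mul KJ trmx1 mulmx1.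
  done.
have e : \det J * \det K = 1 by rewrite -det_mulmx JK det1.
have -> : wedge_ip (fun i => mxapp (invmx A') (u i *m J)) (fun i => u i *m J) =
          wedge_ip (fun i => mxapp (invmx A) (u i)) u.
  rewrite /wedge_ip; congr (\det _); apply/matrixP => i j; rewrite !mxE /ip /mxapp iA'.
  rewrite !trmx_mul !trmxK !mulmxA -[_ *m J *m K]mulmxA JK mulmx1.
  by rewrite -[_ *m K^T *m J^T]mulmxA -trmx_mul JK trmx1 mulmx1.
rewrite /A' !det_mulmx det_tr.
set W := wedge_ip _ _.
have -> : (nu0 * \det K) ^+ 2 * (\det J * \det A * \det J) * W =
   nu0 ^+ 2 * \det A * W * (\det J * \det K) ^+ 2 by ring.
by rewrite e expr1n mulr1.
Qed.

End Alg.

Unset Implicit Arguments.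
Theorem theorem4p4 (R : realType) (m : nat)
  (Om : set 'rV[R]_m.+2) (nu : 'rV[R]_m.+2 -> R)
  (C : 'I_m -> 'rV[R]_m.+2 -> R) (H : 'rV[R]_m.+2 -> R)
  (xe : 'rV[R]_m.+2) (lam : 'rV[R]_m)
  (Om' : set 'rV[R]_m.+2) (Phi Psi : 'rV[R]_m.+2 -> 'rV[R]_m.+2) :
  open Om -> smooth_on Om nu -> (forall i, smooth_on Om (C i)) -> smooth_on Om H ->
  in_E Om nu C H xe ->
  ham_field nu C H xe = 0 ->
  grad H xe + \sum_(i < m) lam 0 i *: grad (C i) xe = 0 ->
  hess (Flam C H lam) xe \in unitmx ->
  open Om' -> Om' `<=` Om -> Om' xe ->
  open (Phi @` Om') ->
  smooth_map_on Om' Phi -> smooth_map_on (Phi @` Om') Psi ->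
  (forall x, Om' x -> Psi (Phi x) = x) ->
  let W' := Phi @` Om' in
  let nuP := nu_push nu Phi Psi in
  let CP := fun i => C i \o Psi in
  let HP := H \o Psi in
  [/\ in_E W' nuP CP HP (Phi xe),
      hess (Flam CP HP lam) (Phi xe) \in unitmx
    & indexI nuP CP HP lam (Phi xe) = indexI nu C H lam xe].

Proof.
move=> oOm snu sC sH [Omxe nu0 nwC wCH] hX glam UA oOm' sub Om'xe oW sPhi sPsi
  PsiPhi W' nuP CP HP.
set y0 := Phi xe.
have Psiy0 : Psi y0 = xe by apply: PsiPhi.
have W'y0 : W' y0 by exists xe.
have PsiW y : W' y -> Om (Psi y).
  by case=> x Ox <-; rewrite PsiPhi //; apply: sub.
have dPsi y k : W' y -> differentiable (fun z => Psi z 0 k) y.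
  by move=> Wy; exact: (sPsi k [::] y Wy).
have d2Psi k l : differentiable (partial l (fun z => Psi z 0 k)) y0.
  exact: (sPsi k [:: l] y0 W'y0).
have dPhi k : differentiable (fun z => Phi z 0 k) xe.
  exact: (sPhi k [::] xe Om'xe).
have dC i x : Om x -> differentiable (C i) x by move=> Ox; exact: (sC i [::] x Ox).
have d2C i k x : Om x -> differentiable (partial k (C i)) x.
  by move=> Ox; exact: (sC i [:: k] x Ox).
have dH x : Om x -> differentiable H x by move=> Ox; exact: (sH [::] x Ox).
have d2H k x : Om x -> differentiable (partial k H) x.
  by move=> Ox; exact: (sH [:: k] x Ox).
pose F := Flam C H lam.
have nOm : \forall x \near xe, Om x by apply: open_nbhs_nbhs; split.
have dlin (f : 'rV[R]_m.+2 -> R) a x : differentiable f x ->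
    differentiable (fun z => a * f z) x.
  move=> df; have -> : (fun z => a * f z) = cst a * f by [].
  by apply: differentiableM => //; exact: differentiable_cst.
have Feq : F = H + \sum_(i < m) (fun z => lam 0 i * C i z).
  by apply/funext => z; rewrite /F /Flam !fctE fct_sumE.
have dF x : Om x -> differentiable F x.
  move=> Ox; rewrite Feq; apply: differentiableD; first exact: dH.
  by apply: differentiable_sum => i; apply: dlin; exact: dC.
have pF k x : Om x ->
    partial k F x = partial k H x + \sum_(i < m) lam 0 i * partial k (C i) x.
  move=> Ox; rewrite /partial Feq deriveD; last 2 first.
  - by apply: diff_derivable; exact: dH.
  - by apply: diff_derivable; apply: differentiable_sum => i; apply: dlin; exact: dC.
  rewrite derive_sum; last by move=> i; apply: diff_derivable; apply: dlin; exact: dC.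
  congr (_ + _); apply: eq_bigr => i _.
  have -> : (fun z => lam 0 i * C i z) = lam 0 i \*o C i by [].
  by rewrite deriveMl //; apply: diff_derivable; exact: dC.
have d2F k : differentiable (partial k F) xe.
  apply: (@near_eq_differentiable _ _ _
    (partial k H + \sum_(i < m) (fun z => lam 0 i * partial k (C i) z))).
    near=> x; rewrite pF; last by near: x.
    by rewrite !fctE fct_sumE.
  apply: differentiableD; first exact: d2H.
  by apply: differentiable_sum => i; apply: dlin; exact: d2C.
have gF k : partial k F xe = 0.
  have E := congr1 (fun M : 'rV[R]_m.+2 => M 0 k) glam.
  rewrite /= !mxE summxE in E.
  rewrite pF // -[RHS]E; congr (_ + _); apply: eq_bigr => i _.
  by rewrite !mxE.
pose J := jac Psi y0.
pose K := jac Phi xe.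
have nOm' : \forall x \near xe, Om' x by apply: open_nbhs_nbhs; split.
have JK : J *m K = 1%:M.
  apply/matrixP => i j.
  have E := chain_partial (f := fun z => Psi z 0 i) (g := Phi) j dPhi (dPsi _ i W'y0).
  rewrite /J /K /jac mxE; under eq_bigr do rewrite !mxE.
  rewrite -E mxE.
  have -> : partial j ((fun z => Psi z 0 i) \o Phi) xe = partial j (fun z => z 0 i) xe.
    apply: near_eq_derive; near=> x; rewrite /= PsiPhi //; near: x; exact: nOm'.
  by rewrite partial_coord eq_sym.
have [UJ UK] := mulmx1_unit JK.
have gradP (f : 'rV[R]_m.+2 -> R) : smooth_on Om f ->
    grad (f \o Psi) y0 = grad f xe *m J.
  move=> sf; apply/rowP => j; rewrite !mxE chain_partial; last first.
  - by rewrite Psiy0; exact: (sf [::] xe Omxe).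
  - by move=> k; apply: dPsi.
  by rewrite Psiy0; apply: eq_bigr => k _; rewrite !mxE.
have gradmxP : gradmx CP y0 = gradmx C xe *m J.
  apply/matrixP => i j; have /rowP /(_ j) := gradP _ (sC i).
  rewrite /grad /gradmx !mxE => ->; apply: eq_bigr => k _; rewrite !mxE //.
have hessP : hess (Flam CP HP lam) y0 = J^T *m hess F xe *m J.
  have -> : Flam CP HP lam = F \o Psi by [].
  have d2F' k : differentiable (partial k F) (Psi y0) by rewrite Psiy0.
  apply/matrixP => i j; rewrite !mxE.
  rewrite (@second_chain _ _ F Psi W' y0 i j oW W'y0 (fun y k Wy => dPsi y k Wy)
     d2Psi (fun y Wy => dF _ (PsiW y Wy)) d2F').
  under eq_bigr do rewrite Psiy0 gF mul0r addr0.
  rewrite /J /jac.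
  under eq_bigr => k _ do rewrite big_distrl /=.
  rewrite exchange_big /=; apply: eq_bigr => l _.
  rewrite !mxE big_distrl /=; apply: eq_bigr => k _; rewrite !mxE.
  by rewrite mulrC mulrA.
have gradHP : grad HP y0 = grad H xe *m J := gradP _ sH.
have gCP i : grad (CP i) y0 = grad (C i) xe *m J := gradP _ (sC i).
have nuPy0 : nuP y0 = nu xe * \det K by rewrite /nuP /nu_push Psiy0.
split.
- split => //.
  + by rewrite nuPy0 mulf_neq0 // -unitfE -unitmxE.
  + by rewrite gradmxP wedge_zero_mul.
  + by rewrite gradmxP gradHP -mul_col_mx; apply/wedge_zero_mul.
- by rewrite hessP !unitmx_mul unitmx_tr UJ UA.
- rewrite /indexI /= hessP nuPy0.
  rewrite -(index_alg (nu xe) (fun i => grad (C i) xe) JK UA).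
  by congr (_ * wedge_ip _ _); apply/funext => i; rewrite gCP.
Unshelve. all: by end_near.
Qed.
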